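(* Let $\lambda$ be a partition of $n$. Denote by $\mathsf{CS}(\lambda)_{[1,n-1]}$ the graph obtained from the crystal skeleton $\mathsf{CS}(\lambda)$ by removing all edges whose label $I$ satisfies $n\in I$. Then there is a graph isomorphism $$\mathsf{CS}(\lambda)_{[1,n-1]}\cong\bigoplus_{\lambda^-}\mathsf{CS}(\lambda^-),$$ where the sum (disjoint union) is over all partitions $\lambda^-$ such that $\lambda/\lambda^-$ is a single box.
   Context: French notation; $\mathsf{SYT}(\lambda)$ standard tableaux; $\mathsf{row}(T)$ reads rows left to right from top row to bottom row; $\mathsf{std}$ replaces the $a_j$ entries $j$, in reading order, by $a_1+\dots+a_{j-1}+1,\dots,a_1+\dots+a_j$. Crystal operator $f_i$: in the subword of letters $i,i+1$ of the reading word, bracket each $i+1$ with an unbracketed $i$ to its right (parenthesis matching); $f_i$ changes the rightmost unbracketed $i$ to $i+1$. For a permutation $\pi$ of $[N]$ and $I=[i,i+2m]\subseteq[N]$, $m\ge1$, $I$ is a Dyck pattern interval of $\pi$ if the RSK insertion tableau of the subword $\pi|_I$ of letters in $I$ has bottom row $i,\dots,i+m$ and top row $i+m+1,\dots,i+2m$; a Dyck pattern interval of $T$ is one of $\mathsf{row}(T)$. The crystal skeleton $\mathsf{CS}(\lambda)$, $|\lambda|=N$, is the directed graph on $\mathsf{SYT}(\lambda)$ with, for each Dyck pattern interval $I=[i,i+2m]$ of $T$, an edge $T\xrightarrow{I}\mathsf{std}(f_i(b))$ labeled $I$, where $b$ is obtained from $T$ by replacing entries $i,\dots,i+m$ by $i$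 and $i+m+1,\dots,i+2m$ by $i+1$. (Equivalently, it is the crystal of semistandard tableaux with each quasi-crystal $\{b:\mathsf{std}(b)=T\}$ contracted to a vertex.) Graph isomorphisms here are of directed edge-labeled graphs. *)

(* Defs.v *)
From mathcomp Require Import all_boot.
Set Implicit Arguments. Unset Strict Implicit. Unset Printing Implicit Defensive.

Definition is_part (l : seq nat) : bool := sorted geq l && all (fun x => 0 < x) l.

(* A tableau is a seq of rows; row 0 is the BOTTOM (longest) row (French notation). *)
Definition tableau := seq (seq nat).
Definition shape (T : tableau) : seq nat := map size T.

Definition is_SYT (lam : seq nat) (T : tableau) : Prop :=
  [/\ shape T = lam,
      perm_eq (flatten T) (iota 1 (sumn lam)),
      (forall r, sorted ltn (nth [::] T r)) &
      (forall r c, c < size (nth [::] T r.+1) ->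
         nth 0 (nth [::] T r) c < nth 0 (nth [::] T r.+1) c)].

Definition rowword (T : tableau) : seq nat := flatten (rev T).

Definition of_rowword (sh : seq nat) (w : seq nat) : tableau :=
  rev (reshape (rev sh) w).

(* RSK row insertion (French: the bumped letter goes to the row above). *)
Fixpoint rsk_ins (P : tableau) (x : nat) : tableau :=
  match P with
  | [::] => [:: [:: x]]
  | r :: P' =>
      let k := find (fun y => x < y) r in
      if k == size r then rcons r x :: P'
      else set_nth 0 r k x :: rsk_ins P' (nth 0 r k)
  end.

Definition rsk_P (w : seq nat) : tableau := foldl rsk_ins [::] w.

(* I = [i, i+2m] is a Dyck pattern interval of the word pi (of [N], N = size pi). *)
Definition dyck_interval (pi : seq nat) (i m : nat) : bool :=
  [&& 1 <= m, 1 <= i, i + 2 * m <= size pi &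
      rsk_P [seq x <- pi | i <= x <= i + 2 * m]
        == [:: iota i m.+1; iota (i + m + 1) m]].

(* Position of the rightmost unbracketed letter i in w (letters i+1 are
   bracketed with an unbracketed i to their right, parenthesis matching). *)
Fixpoint last_unbr (i : nat) (w : seq nat) (cnt pos : nat) (acc : option nat)
  : option nat :=
  match w with
  | [::] => acc
  | x :: w' =>
      if x == i.+1 then last_unbr i w' cnt.+1 pos.+1 acc
      else if x == i then
        (if cnt == 0 then last_unbr i w' 0 pos.+1 (Some pos)
         else last_unbr i w' cnt.-1 pos.+1 acc)
      else last_unbr i w' cnt pos.+1 acc
  end.

Definition f_word (i : nat) (w : seq nat) : option (seq nat) :=
  match last_unbr i w 0 0 None with
  | Some p => Some (set_nth 0 w p i.+1)
  | None => None
  end.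

Definition f_tab (i : nat) (b : tableau) : option tableau :=
  match f_word i (rowword b) with
  | Some w => Some (of_rowword (shape b) w)
  | None => None
  end.

(* Standardization: entries j are replaced, in reading order, by
   a_1+..+a_{j-1}+1, ..., a_1+..+a_j. *)
Definition std_word (w : seq nat) : seq nat :=
  [seq count (fun y => y < nth 0 w p) w
       + count (pred1 (nth 0 w p)) (take p w) + 1 | p <- iota 0 (size w)].

Definition std (b : tableau) : tableau := of_rowword (shape b) (std_word (rowword b)).

Definition collapse (i m : nat) (T : tableau) : tableau :=
  map (map (fun x => if i <= x <= i + m then i
                     else if i + m < x <= i + 2 * m then i.+1 else x)) T.

Definition CS_edge (lam : seq nat) (T : tableau) (I : nat * nat) (T' : tableau) : Prop :=
  let: (i, m) := I in
  [/\ is_SYT lam T, is_SYT lam T', dyck_interval (rowword T) i m &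
      exists b', f_tab i (collapse i m T) = Some b' /\ T' = std b'].

Definition one_box_removed (lam mu : seq nat) : Prop :=
  [/\ is_part mu, (sumn mu).+1 = sumn lam, size mu <= size lam &
      forall k, nth 0 mu k <= nth 0 lam k].

(* Main.v *)
Require Import Defs.
From mathcomp Require Import all_boot.
From mathcomp Require Import zify.
Require Import Defs.
Set Implicit Arguments. Unset Strict Implicit. Unset Printing Implicit Defensive.

Fixpoint fmod (i : nat) (u : seq nat) (c : nat) : option (seq nat) :=
  match u with
  | [::] => None
  | x :: u' =>
    if x == i.+1 then omap (cons x) (fmod i u' c.+1)
    else if x == i then
      (if c == 0 then match fmod i u' 0 with Some v => Some (x :: v) | None => Some (i.+1 :: u') end
       else omap (cons x) (fmod i u' c.-1))
    else omap (cons x) (fmod i u' c)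
  end.

Lemma set_nth_cat_size (pre u : seq nat) x y :
  set_nth 0 (pre ++ x :: u) (size pre) y = pre ++ y :: u.
Proof. by elim: pre => [|a pre IH] //=; rewrite IH. Qed.

Lemma last_unbr_fmod i u c pre acc :
  match last_unbr i u c (size pre) acc with
  | Some p => Some (set_nth 0 (pre ++ u) p i.+1) | None => None end =
  match fmod i u c with
  | Some v => Some (pre ++ v)
  | None => match acc with Some p => Some (set_nth 0 (pre ++ u) p i.+1) | None => None end
  end.
Proof.
elim: u c pre acc => [|x u IH] c pre acc /=; first by rewrite cats0.
have E := IH _ (rcons pre x); rewrite size_rcons cat_rcons in E.
case: ifP => [/eqP Ex|Nx].
  rewrite E; case: (fmod i u c.+1) => [v|] //=; by rewrite cat_rcons Ex.
case: ifP => [/eqP Ex|Nx'].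
  case: ifP => [/eqP c0|cn0].
    rewrite E; case: (fmod i u 0) => [v|] //=; first by rewrite cat_rcons.
    by rewrite set_nth_cat_size.
  rewrite E; case: (fmod i u c.-1) => [v|] //=; by rewrite cat_rcons.
rewrite E; case: (fmod i u c) => [v|] //=; by rewrite cat_rcons.
Qed.

Lemma f_word_fmod i u : f_word i u = fmod i u 0.
Proof.
have := last_unbr_fmod i u 0 [::] None; rewrite /f_word /=.
by case: (last_unbr _ _ _ _ _) => [p|]; case: (fmod _ _ _).
Qed.

Lemma fmod_filter (a : pred nat) i : a i -> a i.+1 -> forall u c,
  fmod i (filter a u) c = omap (filter a) (fmod i u c).
Proof.
move=> ai ai1; elim=> [|x u IH] c //=.
case: (boolP (a x)) => ax; rewrite ?ax /=.
  case: ifP => _; first by rewrite IH; case: (fmod i u c.+1) => /= *; rewrite ?ax.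
  case: ifP => _; last by rewrite IH; case: (fmod i u c) => /= *; rewrite ?ax.
  case: ifP => _; last by rewrite IH; case: (fmod i u c.-1) => /= *; rewrite ?ax.
  by rewrite IH; case: (fmod i u 0) => /= *; rewrite ?ax ?ai1.
have xi1 : x != i.+1 by apply/eqP=> E; rewrite E ai1 in ax.
have xi : x != i by apply/eqP=> E; rewrite E ai in ax.
rewrite (negbTE xi1) (negbTE xi) IH; case: (fmod i u c) => //= v.
by rewrite (negbTE ax).
Qed.

Lemma fmod_spec i u c v : fmod i u c = Some v ->
  exists pre post, u = pre ++ i :: post /\ v = pre ++ i.+1 :: post.
Proof.
elim: u c v => [|x u IH] c v //=.
have H : forall c', omap (cons x) (fmod i u c') = Some v ->
   exists pre post, x :: u = pre ++ i :: post /\ v = pre ++ i.+1 :: post.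
  move=> c'; case E: (fmod i u c') => [w|] //= [<-].
  have [pre [post [-> ->]]] := IH _ _ E.
  by exists (x :: pre), post.
case: (x == i.+1); first by move=> E; apply: (H _ E).
case: (eqVneq x i) => [Ex|_]; last exact: H.
case: (c == 0); last exact: H.
case E: (fmod i u 0) => [w|] [<-].
  have [pre [post [-> ->]]] := IH _ _ E.
  by exists (i :: pre), post; rewrite Ex.
rewrite Ex.
by exists [::], u.
Qed.

Fixpoint stdaux (W pre s : seq nat) : seq nat :=
  match s with
  | [::] => [::]
  | x :: s' => (count (fun y => y < x) W + count (pred1 x) pre + 1) :: stdaux W (rcons pre x) s'
  end.

Lemma stdauxE W s pre : pre ++ s = W ->
  [seq count (fun y => y < nth 0 W p) W + count (pred1 (nth 0 W p)) (take p W) + 1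
    | p <- iota (size pre) (size s)] = stdaux W pre s.
Proof.
elim: s pre => [|x s IH] pre //= EW.
rewrite -IH; last by rewrite cat_rcons.
rewrite size_rcons -EW nth_cat ltnn subnn /= take_size_cat //.
Qed.

Lemma std_wordE w : std_word w = stdaux w [::] w.
Proof. by rewrite /std_word -(stdauxE (pre := [::])). Qed.

Lemma val_n n W pre x s : pre ++ x :: s = W -> all (fun y => y <= n) W ->
  count_mem n W = 1 -> size W = n ->
  (count (fun y => y < x) W + count (pred1 x) pre + 1 == n) = (x == n).
Proof.
move=> EW Hall Hc Hs.
have xW : x \in W by rewrite -EW mem_cat inE eqxx orbT.
have xn : x <= n by exact: (allP Hall).
have cltn : count (fun y => y < n) W = n.-1.
  have E : count (predC (pred1 n)) W = count (fun y => y < n) W.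
    by apply: eq_in_count => y /(allP Hall) yn /=; rewrite ltn_neqAle yn andbT.
  have := count_predC (pred1 n) W; rewrite Hc Hs E; lia.
case: (eqVneq x n) => [Exn|xnn].
  subst x.
  have : count_mem n pre = 0.
    by move: Hc; rewrite -EW count_cat /= eqxx; lia.
  rewrite cltn => ->; apply/eqP; have : 0 < n by move: Hc; rewrite -Hs; case: (W) => //; lia. lia.
apply/negbTE; rewrite neq_ltn; apply/orP; left.
have H1 : count (pred1 x) pre + 1 <= count (pred1 x) W.
  by rewrite -EW count_cat /= eqxx; lia.
have H2 : count (fun y => y < x) W + count (pred1 x) W <= count (predC (pred1 n)) W.
  have E0 : count (predI (fun y => y < x) (pred1 x)) W = 0.
    by apply/eqP; rewrite -leqn0 -(count_pred0 W) ; apply: sub_count => y /= /andP [a /eqP b]; lia.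
  have E1 := count_predUI (fun y => y < x) (pred1 x) W.
  have E2 : count (predU (fun y => y < x) (pred1 x)) W <= count (predC (pred1 n)) W.
    by apply: sub_count => y /= /orP [|/eqP ->]; lia.
  by rewrite -E1 E0 addn0.
have := count_predC (pred1 n) W; rewrite Hc Hs.
have : x < n by lia.
lia.
Qed.

Lemma std_filter_aux n W : all (fun y => y <= n) W -> count_mem n W = 1 -> size W = n ->
  forall s pre, pre ++ s = W ->
  filter (predC1 n) (stdaux W pre s) =
  stdaux (filter (predC1 n) W) (filter (predC1 n) pre) (filter (predC1 n) s).
Proof.
move=> Hall Hc Hs; elim=> [|x s IH] pre //= EW.
have IH' := IH (rcons pre x); rewrite cat_rcons in IH'; have {IH IH'} IH := IH' EW.
rewrite (val_n EW Hall Hc Hs) /=.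
case: (eqVneq x n) => [xn|xn] /=.
  by subst x; rewrite IH filter_rcons /= ?eqxx.
rewrite IH filter_rcons /= xn; congr (_ :: _); congr (_ + _ + _).
  rewrite count_filter; apply: eq_count => y /=.
  have xW : x \in W by rewrite -EW mem_cat inE eqxx orbT.
  have := allP Hall x xW; case: (ltnP y x) => //= yx xle.
  apply/eqP; lia.
rewrite count_filter; apply: eq_count => y /=.
by case: eqP => // ->; rewrite xn.
Qed.

Lemma std_filter n W : all (fun y => y <= n) W -> count_mem n W = 1 -> size W = n ->
  filter (predC1 n) (std_word W) = std_word (filter (predC1 n) W).
Proof.
by move=> Hall Hc Hs; rewrite !std_wordE (std_filter_aux Hall Hc Hs (pre := [::])).
Qed.

Lemma std_mask_aux n W : all (fun y => y <= n) W -> count_mem n W = 1 -> size W = n ->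
  forall s pre, pre ++ s = W ->
  map (predC1 n) (stdaux W pre s) = map (predC1 n) s.
Proof.
move=> Hall Hc Hs; elim=> [|x s IH] pre //= EW.
have IH' := IH (rcons pre x); rewrite cat_rcons in IH'.
by rewrite (val_n EW Hall Hc Hs) IH'.
Qed.

Lemma std_mask n W : all (fun y => y <= n) W -> count_mem n W = 1 -> size W = n ->
  map (predC1 n) (std_word W) = map (predC1 n) W.
Proof.
by move=> Hall Hc Hs; rewrite !std_wordE (std_mask_aux Hall Hc Hs (pre := [::])).
Qed.

Lemma size_std_word w : size (std_word w) = size w.
Proof. by rewrite /std_word size_map size_iota. Qed.


Lemma map_flat (f : nat -> bool) (ss : seq (seq nat)) : map f (flatten ss) = flatten (map (map f) ss).
Proof. by elim: ss => //= a ss IH; rewrite map_cat IH. Qed.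

Lemma map_flatn (f : nat -> nat) (ss : seq (seq nat)) : map f (flatten ss) = flatten (map (map f) ss).
Proof. by elim: ss => //= a ss IH; rewrite map_cat IH. Qed.

Lemma rowword_of_rowword sh w : sumn sh = size w -> rowword (of_rowword sh w) = w.
Proof. by move=> H; rewrite /rowword /of_rowword revK reshapeKr // sumn_rev H. Qed.

Lemma shape_of_rowword sh w : sumn sh = size w -> shape (of_rowword sh w) = sh.
Proof.
by move=> H; rewrite /shape /of_rowword map_rev -/(seq.shape _) reshapeKl ?revK // sumn_rev H.
Qed.

Lemma of_rowwordK T : of_rowword (shape T) (rowword T) = T.
Proof.
rewrite /of_rowword /rowword.
have -> : rev (shape T) = seq.shape (rev T) by rewrite /shape /seq.shape map_rev.
by rewrite flattenK revK.
Qed.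

Lemma sumn_shape_size T : sumn (shape T) = size (rowword T).
Proof. by rewrite /rowword size_flatten /seq.shape map_rev sumn_rev. Qed.

Definition cg i m x := if i <= x <= i + m then i else if i + m < x <= i + 2 * m then i.+1 else x.

Lemma rowword_collapse i m T : rowword (collapse i m T) = map (cg i m) (rowword T).
Proof. by rewrite /rowword /collapse map_flatn map_rev. Qed.

Lemma shape_collapse i m T : shape (collapse i m T) = shape T.
Proof. by rewrite /shape /collapse -map_comp; apply: eq_map => r /=; rewrite size_map. Qed.

Definition del n (T : tableau) : tableau :=
  filter (fun r => r != [::]) (map (filter (predC1 n)) T).

Lemma flatten_filter_nonempty (X : seq (seq nat)) :
  flatten (filter (fun r => r != [::]) X) = flatten X.
Proof. by elim: X => [|a X IH] //=; case: a => //= x a; rewrite IH. Qed.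

Lemma rowword_del n T : rowword (del n T) = filter (predC1 n) (rowword T).
Proof.
rewrite /rowword /del filter_flatten -filter_rev map_rev.
by rewrite flatten_filter_nonempty.
Qed.

Lemma shape_del_aux n (T : tableau) :
  map size (filter (fun r => r != [::]) (map (filter (predC1 n)) T)) =
  filter (fun k => k != 0) (map (count (predC1 n)) T).
Proof.
elim: T => //= r T IH; rewrite -size_filter -size_eq0.
by case: (size _ == 0) => //=; rewrite IH.
Qed.

Definition maskshape (sh : seq nat) (mk : seq bool) : seq nat :=
  filter (fun k => k != 0) (map (count id) (rev (reshape (rev sh) mk))).

Lemma shape_del n T : shape (del n T) = maskshape (shape T) (map (predC1 n) (rowword T)).
Proof.
rewrite /maskshape /rowword map_flat.
have -> : rev (shape T) = seq.shape (rev (map (map (predC1 n)) T)).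
  by rewrite /shape /seq.shape -!map_rev -map_comp; apply: eq_map => r /=; rewrite size_map.
rewrite -map_rev flattenK -map_rev revK /del /shape shape_del_aux.
congr filter; rewrite -map_comp; apply: eq_map => r /=; by rewrite count_map.
Qed.

Lemma mask_filter_eq n (u v : seq nat) :
  map (predC1 n) u = map (predC1 n) v -> filter (predC1 n) u = filter (predC1 n) v -> u = v.
Proof.
elim: u v => [|x u IH] [|y v] //= [Exy Em].
case: (eqVneq x n) => [xn|xn]; case: (eqVneq y n) => [yn|yn] //=; move: Exy.
- by subst; rewrite eqxx /= => _ E; rewrite (IH v).
- by subst; rewrite eqxx yn.
- by subst; rewrite eqxx xn.
- by rewrite xn yn => _ [-> E]; rewrite (IH v).
Qed.


Lemma sorted_rcons_inv (R : seq nat) y :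
  sorted ltn (rcons R y) -> sorted ltn R /\ all (fun x => x < y) R.
Proof.
rewrite -[rcons R y]revK rev_rcons rev_sorted /= => H.
have tr : transitive (fun z x : nat => x < z) by move=> a b c /=; lia.
rewrite (path_sortedE tr) in H; case/andP: H => H1 H2.
split; last by rewrite -all_rev.
by rewrite -(revK R) rev_sorted.
Qed.

Lemma sorted_last (s : seq nat) n : sorted ltn s -> n \in s -> all (fun x => x <= n) s ->
  exists R, s = rcons R n /\ all (fun x => x < n) R.
Proof.
case/lastP: s => [|R y] // Hs Hn Ha.
have [_ HR] := sorted_rcons_inv Hs.
have yn : y <= n by move/allP: Ha; apply; rewrite mem_rcons inE eqxx.
case: (eqVneq y n) => [Eyn|ny]; first by subst y; exists R.
move: Hn; rewrite mem_rcons inE eq_sym (negbTE ny) /= => /(allP HR); lia.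
Qed.

Lemma mem_nth_flatten (T : tableau) k x : x \in nth [::] T k -> x \in flatten T.
Proof.
elim: T k => [|r T IH] [|k] //=; first by move=> H; rewrite mem_cat H.
by move=> H; rewrite mem_cat (IH k H) orbT.
Qed.

Lemma flatten_mem_nth (T : tableau) x : x \in flatten T -> exists2 k, k < size T & x \in nth [::] T k.
Proof.
elim: T => [|r T IH] //=; rewrite mem_cat => /orP [H|H]; first by exists 0.
by have [k Hk Hx] := IH H; exists k.+1.
Qed.

Lemma uniq_rows (T : tableau) x k k' : uniq (flatten T) ->
  x \in nth [::] T k -> x \in nth [::] T k' -> k = k'.
Proof.
elim: T k k' => [|r T IH] [|k] [|k'] //=; rewrite cat_uniq => /and3P [_ Hd Hu].
- move=> H1 H2; case/negP: Hd; apply/hasP; exists x => //; exact: mem_nth_flatten H2.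
- move=> H2 H1; case/negP: Hd; apply/hasP; exists x => //; exact: mem_nth_flatten H2.
- by move=> H1 H2; rewrite (IH k k').
Qed.

Lemma part_pos lam k : is_part lam -> k < size lam -> 0 < nth 0 lam k.
Proof. by case/andP=> _ /allP H Hk; apply: H; rewrite mem_nth. Qed.

Lemma part_mono lam k k' : is_part lam -> k <= k' -> nth 0 lam k' <= nth 0 lam k.
Proof.
case/andP=> Hs _ Hkk.
case: (ltnP k' (size lam)) => Hk'; last by rewrite nth_default.
have tr : transitive geq by move=> a b c /=; lia.
have rf : reflexive geq by move=> a /=.
have := sorted_leq_nth tr rf 0 Hs; apply => //; rewrite inE //; lia.
Qed.

Lemma size_nth_shape (T : tableau) k : size (nth [::] T k) = nth 0 (shape T) k.
Proof.
case: (ltnP k (size T)) => Hk; first by rewrite /shape (nth_map [::]).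
by rewrite !nth_default // /shape size_map.
Qed.

Lemma nth_filter_prefix (X : seq (seq nat)) :
  (forall k, nth [::] X k = [::] -> nth [::] X k.+1 = [::]) ->
  forall k, nth [::] (filter (fun r => r != [::]) X) k = nth [::] X k.
Proof.
elim: X => [|a X IH] //= H.
have H' : forall k, nth [::] X k = [::] -> nth [::] X k.+1 = [::] by move=> k; exact: (H k.+1).
case: (eqVneq a [::]) => [Ea|Na] /=.
  have allE : forall k, nth [::] X k = [::].
    elim=> [|k IHk]; first by apply: (H 0).
    by apply: H'.
  have -> : filter (fun r => r != [::]) X = [::].
    apply/eqP; rewrite -size_eq0 size_filter -leqn0.
    rewrite (@eq_in_count _ _ pred0) ?count_pred0 //.
    move=> r /(nthP [::]) [k Hk <-]; by rewrite allE.
  by case=> [|k] /=; rewrite ?Ea ?allE ?nth_nil.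
by case=> [|k] //=; rewrite IH.
Qed.

Lemma filter_pn_iota n : 0 < n -> filter (predC1 n) (iota 1 n) = iota 1 n.-1.
Proof.
move=> Hn; have -> : iota 1 n = iota 1 n.-1 ++ iota (1 + n.-1) 1 by rewrite -iotaD addn1 prednK.
rewrite filter_cat /= add1n prednK // eqxx cats0.
apply/all_filterP/allP => x; rewrite mem_iota /=; lia.
Qed.

Lemma all_pos_shape_filter (X : seq (seq nat)) :
  all (fun x => 0 < x) (shape (filter (fun r => r != [::]) X)).
Proof. by elim: X => //= a X IH; case: a => //= x a; rewrite IH. Qed.

Definition ins n (lam : seq nat) r (S : tableau) : tableau :=
  mkseq (fun k => if k == r then rcons (nth [::] S k) n else nth [::] S k) (size lam).

Lemma syt_del n lam T : is_part lam -> sumn lam = n -> 0 < n -> is_SYT lam T ->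
  exists r, [/\ r < size lam,
    (forall k, nth 0 lam k = nth 0 (shape (del n T)) k + (k == r)),
    one_box_removed lam (shape (del n T)),
    is_SYT (shape (del n T)) (del n T) &
    T = ins n lam r (del n T)].
Proof.
move=> Hp Hsum Hn HT; case: (HT) => Hsh Hperm Hrows Hcol.
rewrite Hsum in Hperm.
have HsT : size T = size lam by rewrite -Hsh /shape size_map.
have Hu : uniq (flatten T) by rewrite (perm_uniq Hperm) iota_uniq.
have Hmem : forall x, x \in flatten T -> 1 <= x <= n.
  by move=> x; rewrite (perm_mem Hperm) mem_iota; lia.
have nT : n \in flatten T by rewrite (perm_mem Hperm) mem_iota; lia.
have [r Hr HnR] := flatten_mem_nth nT.
have Hle : all (fun x => x <= n) (nth [::] T r).
  by apply/allP => x /mem_nth_flatten /Hmem; lia.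
have [R [ER HR]] := sorted_last (Hrows r) HnR Hle.
set S0 := set_nth [::] T r R.
have nS0 : forall k, nth [::] S0 k = if k == r then R else nth [::] T k.
  by move=> k; rewrite nth_set_nth.
have Hnot : forall k, k != r -> n \notin nth [::] T k.
  move=> k kr; apply/negP => H; move/eqP: kr; apply; exact: (uniq_rows Hu H HnR).
have EA : map (filter (predC1 n)) T = S0.
  apply: (@eq_from_nth _ [::]); first by rewrite size_map /S0 size_set_nth (maxn_idPr Hr).
  move=> k; rewrite size_map => Hk; rewrite (nth_map [::]) // nS0.
  case: (eqVneq k r) => [->|kr].
    rewrite ER filter_rcons /= eqxx /=; apply/all_filterP.
    by apply: sub_all HR => x /=; rewrite neq_ltn => ->.
  apply/all_filterP/allP => x Hx /=; apply/eqP => E; subst x.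
  by have := Hnot k kr; rewrite Hx.
have Hdel : del n T = filter (fun r => r != [::]) S0 by rewrite /del EA.
have HrowsT : forall k, k < size T -> 0 < size (nth [::] T k).
  by move=> k Hk; rewrite size_nth_shape Hsh; apply: part_pos; rewrite -?HsT.
have HB : size (nth [::] T r.+1) <= size R.
  rewrite leqNgt; apply/negP => Hlt.
  have := Hcol r (size R) Hlt; rewrite ER nth_rcons ltnn eqxx.
  have : nth 0 (nth [::] T r.+1) (size R) \in flatten T.
    by apply: (mem_nth_flatten (k:=r.+1)); apply: mem_nth.
  move/Hmem; lia.
have Hpre : forall k, nth [::] S0 k = [::] -> nth [::] S0 k.+1 = [::].
  move=> k; rewrite !nS0.
  case: (eqVneq k r) => [->|kr].
    move=> R0; rewrite ifN; last by rewrite neq_ltn ltnSn orbT.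
    by apply/eqP; rewrite -size_eq0 -leqn0; rewrite R0 in HB.
  move=> E.
  have Hk : size T <= k.
    by rewrite leqNgt; apply/negP => Hk; have := HrowsT k Hk; rewrite E.
  rewrite ifN; first by rewrite nth_default //; lia.
  apply/eqP; lia.
have nS : forall k, nth [::] (del n T) k = if k == r then R else nth [::] T k.
  by move=> k; rewrite Hdel nth_filter_prefix // nS0.
set mu := shape (del n T).
have Hmu : forall k, nth 0 mu k = if k == r then size R else nth 0 lam k.
  move=> k; rewrite /mu -size_nth_shape nS; case: eqP => // _.
  by rewrite size_nth_shape Hsh.
have Hlamr : nth 0 lam r = (size R).+1 by rewrite -Hsh -size_nth_shape ER size_rcons.
have Hrel : forall k, nth 0 lam k = nth 0 mu k + (k == r).
  move=> k; rewrite Hmu; case: eqVneq => [->|_]; first by rewrite Hlamr addn1.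
  by rewrite addn0.
have Hflat : flatten (del n T) = filter (predC1 n) (flatten T).
  by rewrite /del filter_flatten flatten_filter_nonempty.
have Hcnt : size (flatten (del n T)) = n.-1.
  rewrite Hflat.
  have := perm_filter (predC1 n) Hperm; rewrite filter_pn_iota // => /perm_size ->.
  by rewrite size_iota.
have Hsmu : sumn mu = n.-1 by rewrite /mu -size_flatten.
exists r; split => //.
- by rewrite -HsT.
- split.
  + apply/andP; split; last by rewrite /mu Hdel; exact: all_pos_shape_filter.
    apply/(sortedP 0) => k Hk /=; rewrite !Hmu.
    case: (eqVneq k r) => [->|kr].
      by rewrite ifN ?neq_ltn ?ltnSn ?orbT // -Hsh -size_nth_shape.
    case: (eqVneq k.+1 r) => [E|k1r].
      have := part_mono Hp (ltnW (ltnSn k)); rewrite E; lia.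
    exact: part_mono.
  + rewrite Hsmu -Hsum; rewrite Hsum; lia.
  + rewrite /mu /shape size_map Hdel size_filter; apply: leq_trans (count_size _ _) _.
    rewrite /S0 size_set_nth (maxn_idPr Hr).
    by rewrite HsT.
  + by move=> k; have := Hrel k; lia.
- split => //.
  + by rewrite Hsmu Hflat -(filter_pn_iota Hn); exact: perm_filter.
  + move=> k; rewrite nS; case: eqP => _; last exact: Hrows.
    by have := Hrows r; rewrite ER => /sorted_rcons_inv [].
  + move=> k c; rewrite !nS.
    case: (eqVneq k r) => [->|kr].
      rewrite ifN ?neq_ltn ?ltnSn ?orbT // => Hc.
      have Hc' : c < size R by apply: leq_trans HB.
      by have := Hcol r c Hc; rewrite ER nth_rcons Hc'.
    case: (eqVneq k.+1 r) => [E|k1r] Hc.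
      have Hc' : c < size (nth [::] T k.+1) by rewrite E ER size_rcons ltnS ltnW.
      by have := Hcol k c Hc'; rewrite E ER nth_rcons Hc.
    exact: Hcol.
- apply: (@eq_from_nth _ [::]); first by rewrite size_mkseq.
  move=> k Hk; rewrite nth_mkseq -?HsT // !nS.
  by case: eqVneq => [->|_] //.
Qed.


Lemma sumn_le_pw (lam mu : seq nat) : size mu <= size lam ->
  (forall k, nth 0 mu k <= nth 0 lam k) -> sumn mu <= sumn lam.
Proof.
elim: lam mu => [|c l IHl] [|d m] //= Hs H.
have := H 0; have := IHl m Hs (fun k => H k.+1) => /=; lia.
Qed.

Lemma sum_eq_pointwise (lam mu : seq nat) : size mu <= size lam ->
  (forall k, nth 0 mu k <= nth 0 lam k) -> sumn mu = sumn lam ->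
  forall k, nth 0 lam k = nth 0 mu k.
Proof.
elim: lam mu => [|a lam IH] mu /=.
  by rewrite leqn0 size_eq0 => /eqP -> _ _ k; rewrite !nth_nil.
move=> Hs Hle Hsum.
have Hmu : mu = head 0 mu :: behead mu \/ mu = [::] by case: mu {Hs Hle Hsum} => [|b mu]; [right|left].
have H0 := Hle 0; have HS : forall k, nth 0 (behead mu) k <= nth 0 lam k.
  by move=> k; have := Hle k.+1; case: (mu) => [|b m] //=; rewrite nth_nil.
have Hsz : size (behead mu) <= size lam by rewrite size_behead; lia.
have Hsm : sumn mu = head 0 mu + sumn (behead mu) by case: (mu).
have Hh : nth 0 mu 0 = head 0 mu by case: (mu).
rewrite Hh /= in H0.
have Hb : head 0 mu = a.
  have := sumn_le_pw Hsz HS; lia.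
have Hrest := IH _ Hsz HS ltac:(lia).
case=> [|k] /=; first by rewrite Hh Hb.
by rewrite Hrest; case: (mu) => [|b m] //=; rewrite !nth_nil.
Qed.

Lemma box_aux (lam mu : seq nat) : size mu <= size lam ->
  (forall k, nth 0 mu k <= nth 0 lam k) -> (sumn mu).+1 = sumn lam ->
  exists r, r < size lam /\ forall k, nth 0 lam k = nth 0 mu k + (k == r).
Proof.
elim: lam mu => [|a lam IH] mu //=.
move=> Hs Hle Hsum.
have H0 := Hle 0; have HS : forall k, nth 0 (behead mu) k <= nth 0 lam k.
  by move=> k; have := Hle k.+1; case: (mu) => [|b m] //=; rewrite nth_nil.
have Hsz : size (behead mu) <= size lam by rewrite size_behead; lia.
have Hsm : sumn mu = head 0 mu + sumn (behead mu) by case: (mu).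
have Hh : nth 0 mu 0 = head 0 mu by case: (mu).
have HmuS : forall k, nth 0 mu k.+1 = nth 0 (behead mu) k by case: (mu) => [|b m] k //=; rewrite nth_nil.
rewrite Hh /= in H0.
have Hsl := sumn_le_pw Hsz HS.
case: (eqVneq (head 0 mu) a) => [Ea|Na].
  have [r [Hr Hk]] := IH _ Hsz HS ltac:(lia).
  exists r.+1; split; first by [].
  case=> [|k] /=; first by rewrite Hh Ea addn0.
  by rewrite Hk HmuS.
have Heq := sum_eq_pointwise Hsz HS ltac:(lia).
exists 0; split => //.
case=> [|k] /=; first by rewrite Hh; lia.
by rewrite Heq HmuS addn0.
Qed.

Lemma one_box_row lam mu : one_box_removed lam mu ->
  exists r, r < size lam /\ forall k, nth 0 lam k = nth 0 mu k + (k == r).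
Proof. by case=> _ Hs Hsz Hle; apply: box_aux. Qed.

Definition pad (S : tableau) m : tableau := S ++ nseq (m - size S) [::].

Lemma nth_pad S m k : nth [::] (pad S m) k = nth [::] S k.
Proof.
rewrite /pad nth_cat nth_nseq; case: ltnP => // H.
by rewrite nth_default //; case: ifP.
Qed.

Lemma nth_ins n lam r S k : size S <= size lam -> r < size lam ->
  nth [::] (ins n lam r S) k = if k == r then rcons (nth [::] S k) n else nth [::] S k.
Proof.
move=> HS Hr; rewrite /ins; case: (ltnP k (size lam)) => Hk; first by rewrite nth_mkseq.
rewrite nth_default ?size_mkseq //.
rewrite ifN; last by apply/eqP; lia.
by rewrite nth_default //; lia.
Qed.

Lemma ins_set_nth n lam r S : size S <= size lam -> r < size lam ->
  ins n lam r S = set_nth [::] (pad S (size lam)) r (rcons (nth [::] S r) n).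
Proof.
move=> HS Hr; apply: (@eq_from_nth _ [::]).
  rewrite size_mkseq size_set_nth /pad size_cat size_nseq; lia.
move=> k _; rewrite nth_ins // nth_set_nth /= nth_pad.
by case: eqP => // ->.
Qed.

Lemma perm_flatten_set_nth (X : tableau) r x : r < size X ->
  perm_eq (flatten (set_nth [::] X r (rcons (nth [::] X r) x))) (x :: flatten X).
Proof.
elim: X r => [|a X IH] [|r] //= Hr.
  by apply/permP => p; rewrite -cats1 -catA /= !count_cat /=; lia.
have /permP H := IH r Hr.
by apply/permP => p; rewrite /= !count_cat H /=; lia.
Qed.

Lemma flatten_pad S m : flatten (pad S m) = flatten S.
Proof. by rewrite /pad flatten_cat; elim: (m - size S) => [|k IH] /=; rewrite ?cats0. Qed.

Lemma sorted_rcons_intro (R : seq nat) y :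
  sorted ltn R -> all (fun x => x < y) R -> sorted ltn (rcons R y).
Proof.
move=> H1 H2; rewrite -[rcons R y]revK rev_rcons rev_sorted /=.
have tr : transitive (fun z x : nat => x < z) by move=> a b c /=; lia.
rewrite (path_sortedE tr) all_rev H2 /=.
by rewrite -rev_sorted revK.
Qed.

Lemma filter_nonempty_pad (S : tableau) m : (forall k, k < size S -> nth [::] S k != [::]) ->
  filter (fun r => r != [::]) (pad S m) = S.
Proof.
move=> H; rewrite /pad filter_cat.
have -> : filter (fun r : seq nat => r != [::]) (nseq (m - size S) [::]) = [::].
  by elim: (m - size S).
rewrite cats0; apply/all_filterP/allP => x /(nthP [::]) [k Hk <-]; exact: H.
Qed.

Lemma ins_SYT n lam mu r S : is_part lam -> is_part mu -> sumn lam = n ->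
  (sumn mu).+1 = sumn lam ->
  is_SYT mu S -> r < size lam -> size mu <= size lam ->
  (forall k, nth 0 lam k = nth 0 mu k + (k == r)) ->
  is_SYT lam (ins n lam r S) /\ del n (ins n lam r S) = S.
Proof.
move=> Hpl Hpm Hsum Hsm [Hsh Hperm Hrows Hcol] Hr Hsz Hrel.
have HsS : size S = size mu by rewrite -Hsh /shape size_map.
have HSl : size S <= size lam by rewrite HsS.
have En : n = (sumn mu).+1 by rewrite Hsm.
have Hmem : forall x, x \in flatten S -> 1 <= x < n.
  by move=> x; rewrite (perm_mem Hperm) mem_iota; lia.
have nI := nth_ins n (r := r) (S := S) _ HSl Hr.
have Hpos : forall k, k < size S -> 0 < size (nth [::] S k).
  by move=> k Hk; rewrite size_nth_shape Hsh; apply: part_pos; rewrite -?HsS.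
have Hfil : forall k, filter (predC1 n) (nth [::] S k) = nth [::] S k.
  move=> k; apply/all_filterP/allP => x Hx /=.
  by have := Hmem x (mem_nth_flatten Hx); case: eqP => // ->; lia.
split.
- split.
  + apply: (@eq_from_nth _ 0); first by rewrite /shape size_map size_mkseq.
    move=> k _; rewrite -size_nth_shape nI Hrel.
    case: eqVneq => [->|kr]; rewrite ?size_rcons size_nth_shape Hsh; lia.
  + rewrite ins_set_nth //.
    have Hrp : r < size (pad S (size lam)) by rewrite /pad size_cat size_nseq; lia.
    have := perm_flatten_set_nth n Hrp; rewrite nth_pad flatten_pad => H.
    apply: perm_trans H _.
    have -> : iota 1 (sumn lam) = iota 1 (sumn mu) ++ [:: n].
      by rewrite -Hsm -[(sumn mu).+1]addn1 iotaD add1n En.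
    apply/permP => p; have := (permP Hperm) p; rewrite /= count_cat /=; lia.
  + move=> k; rewrite nI; case: eqP => _; last exact: Hrows.
    apply: sorted_rcons_intro (Hrows k) _.
    by apply/allP => x Hx; have := Hmem x (mem_nth_flatten Hx); lia.
  + move=> k c; rewrite !nI.
    case: (eqVneq k r) => [Ek|kr].
      subst k; rewrite ifN ?neq_ltn ?ltnSn ?orbT // => Hc.
      have H' := part_mono Hpm (leqnSn r); rewrite -Hsh -!size_nth_shape in H'.
      have Hc' : c < size (nth [::] S r) by apply: leq_trans Hc H'.
      rewrite nth_rcons Hc'; exact: Hcol.
    case: (eqVneq k.+1 r) => [E|k1r].
      rewrite E size_rcons ltnS => Hc.
      rewrite nth_rcons; case: (ltnP c (size (nth [::] S r))) => Hc'.
        by have := Hcol k c; rewrite E => H; apply: H.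
      have Ec : c = size (nth [::] S r) by apply/eqP; rewrite eqn_leq Hc Hc'.
      rewrite Ec eqxx.
      have Hk : size (nth [::] S r) < size (nth [::] S k).
        rewrite !size_nth_shape Hsh.
        have := Hrel k; have := Hrel r; rewrite eqxx (negbTE kr).
        have := part_mono Hpl (ltnW (leqnn k.+1)); rewrite E => H1 H2 H3; rewrite /= addn0 addn1 in H2 H3; lia.
      by case/andP: (Hmem _ (mem_nth_flatten (mem_nth 0 Hk))).
    exact: Hcol.
- rewrite /del.
  have -> : map (filter (predC1 n)) (ins n lam r S) = pad S (size lam).
    apply: (@eq_from_nth _ [::]).
      by rewrite size_map size_mkseq /pad size_cat size_nseq (subnKC HSl).
    move=> k; rewrite size_map size_mkseq => Hk.
    rewrite (nth_map [::]) ?size_mkseq // nI nth_pad.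
    case: eqP => _; last exact: Hfil.
    by rewrite filter_rcons /= eqxx /= Hfil.
  apply: filter_nonempty_pad => k Hk; rewrite -size_eq0 -lt0n; exact: Hpos.
Qed.


Lemma map_pn_nseq n (s : seq nat) : n \notin s -> map (predC1 n) s = nseq (size s) true.
Proof. elim: s => //= x s IH; rewrite inE negb_or eq_sym => /andP [-> /IH ->]. by []. Qed.

Lemma flatten_del n T : flatten (del n T) = filter (predC1 n) (flatten T).
Proof. by rewrite /del filter_flatten flatten_filter_nonempty. Qed.

Lemma mask_ins n lam r S : size S <= size lam -> r < size lam -> n \notin flatten S ->
  map (predC1 n) (rowword (ins n lam r S)) =
  flatten (rev (mkseq (fun k => if k == r then rcons (nseq (nth 0 (shape S) k) true) false
                               else nseq (nth 0 (shape S) k) true) (size lam))).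
Proof.
move=> HS Hr HnS; rewrite /rowword map_flat map_rev; congr (flatten (rev _)).
apply: (@eq_from_nth _ [::]); first by rewrite size_map !size_mkseq.
move=> k; rewrite size_map size_mkseq => Hk.
have Hn : n \notin nth [::] S k by apply/negP => /mem_nth_flatten H; rewrite H in HnS.
rewrite (nth_map [::]) ?size_mkseq // nth_ins // nth_mkseq // -size_nth_shape.
by case: eqP => _; rewrite ?map_rcons map_pn_nseq //= eqxx.
Qed.

Lemma perm_rowword T : perm_eq (rowword T) (flatten T).
Proof.
rewrite /rowword; elim: T => //= a T IH.
rewrite rev_cons -cats1 flatten_cat /= cats0.
by apply/permP => p; rewrite !count_cat (permP IH); lia.
Qed.

Lemma word_facts n lam T : 0 < n -> sumn lam = n -> is_SYT lam T ->
  [/\ size (rowword T) = n, all (fun x => x <= n) (rowword T) & count_mem n (rowword T) = 1].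
Proof.
move=> Hn Hs [Hsh Hperm _ _].
have Hp : perm_eq (rowword T) (iota 1 n) by rewrite -Hs; apply: perm_trans (perm_rowword T) Hperm.
split.
- by rewrite (perm_size Hp) size_iota.
- by apply/allP => x; rewrite (perm_mem Hp) mem_iota; lia.
- by rewrite (permP Hp) count_uniq_mem ?iota_uniq // mem_iota; apply/eqP; rewrite eqb1; lia.
Qed.

Lemma count_pn n (w : seq nat) : count (predC1 n) w = size w - count_mem n w.
Proof.
by rewrite -(count_predC (pred1 n) w) addKn; apply: eq_count.
Qed.

Lemma pn_cg n i m x : i + 2 * m < n -> predC1 n (cg i m x) = predC1 n x.
Proof.
move=> H; rewrite /cg /=.
case: ifP => [/andP [_ h]|_].
  have -> : (x == n) = false by apply/eqP; lia.
  have -> : (i == n) = false by apply/eqP; lia.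
  by [].
case: ifP => [/andP [h0 h]|_] //.
have -> : (x == n) = false by apply/eqP; lia.
have -> : (i.+1 == n) = false by apply/eqP; lia.
by [].
Qed.

Lemma cg_le n i m x : i + 2 * m < n -> x <= n -> cg i m x <= n.
Proof. by move=> H; rewrite /cg; case: ifP => _; [lia|case: ifP => _; lia]. Qed.

Lemma cg_facts n i m u : i + 2 * m < n -> all (fun x => x <= n) u -> count_mem n u = 1 ->
  size u = n ->
  [/\ filter (predC1 n) (map (cg i m) u) = map (cg i m) (filter (predC1 n) u),
      map (predC1 n) (map (cg i m) u) = map (predC1 n) u,
      all (fun x => x <= n) (map (cg i m) u),
      count_mem n (map (cg i m) u) = 1 & size (map (cg i m) u) = n].
Proof.
move=> H Hall Hc Hs; split.
- by rewrite filter_map; congr map; apply: eq_filter => x; have := pn_cg x H; rewrite /preim /=.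
- by rewrite -map_comp; apply: eq_map => x; have := pn_cg x H.
- by rewrite all_map; apply: sub_all Hall => x /=; apply: cg_le.
- rewrite count_map -Hc; apply: eq_count => x /=.
  by have := pn_cg x H; rewrite /= => /negb_inj.
- by rewrite size_map.
Qed.

Lemma fmod_facts n i U w : i.+1 < n -> fmod i U 0 = Some w ->
  all (fun x => x <= n) U -> count_mem n U = 1 -> size U = n ->
  [/\ map (predC1 n) w = map (predC1 n) U, all (fun x => x <= n) w,
      count_mem n w = 1 & size w = n].
Proof.
move=> Hi /fmod_spec [pre [post [-> ->]]].
rewrite !all_cat !count_cat !size_cat /= => /andP [-> /andP [Hi' ->]] Hc Hs.
have e1 : (i == n) = false by apply/eqP; lia.
have e2 : (i.+1 == n) = false by apply/eqP; lia.
split.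
- rewrite !map_cat /=; congr (_ ++ _ :: _).
  by case: (eqVneq i.+1 n) => [E|_]; case: (eqVneq i n) => [E'|_] //; lia.
- by rewrite /=; lia.
- move: Hc; rewrite /=.
  by case: (eqVneq i.+1 n) => [E|_]; case: (eqVneq i n) => [E'|_] //=; lia.
- by [].
Qed.


Lemma std_of_rowword sh w : sumn sh = size w -> std (of_rowword sh w) = of_rowword sh (std_word w).
Proof. by move=> H; rewrite /std shape_of_rowword // rowword_of_rowword. Qed.

Lemma f_tab_E i b : f_tab i b = omap (of_rowword (shape b)) (fmod i (rowword b) 0).
Proof. by rewrite /f_tab f_word_fmod; case: (fmod _ _ _). Qed.

Lemma dyck_filter n (w : seq nat) i m : i + 2 * m < n ->
  [seq x <- filter (predC1 n) w | i <= x <= i + 2 * m] = [seq x <- w | i <= x <= i + 2 * m].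
Proof.
move=> H; rewrite -filter_predI; apply: eq_filter => x /=.
by case: (i <= x <= i + 2 * m) / andP => [[_ h]|] //=; apply/eqP; lia.
Qed.

Lemma del_mask n lam T1 T2 : is_part lam -> sumn lam = n -> 0 < n ->
  is_SYT lam T1 -> is_SYT lam T2 -> shape (del n T1) = shape (del n T2) ->
  map (predC1 n) (rowword T1) = map (predC1 n) (rowword T2).
Proof.
move=> Hp Hs Hn H1 H2 Emu.
have [r1 [Hr1 Hrel1 [_ _ Hsz1 _] _ E1]] := syt_del Hp Hs Hn H1.
have [r2 [Hr2 Hrel2 [_ _ Hsz2 _] _ E2]] := syt_del Hp Hs Hn H2.
have Er : r1 = r2.
  have := Hrel1 r1; rewrite Hrel2 Emu eqxx.
  by case: eqVneq => // _ /=; lia.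
subst r2.
have nS : forall T, n \notin flatten (del n T).
  by move=> T; rewrite flatten_del mem_filter /= eqxx.
have sz : forall T, size (del n T) = size (shape (del n T)) by move=> T; rewrite /shape size_map.
rewrite E1 E2 !mask_ins ?Emu ?sz ?Emu //.
Qed.


Theorem theorem4p11 (n : nat) (lam : seq nat) :
  0 < n -> is_part lam -> sumn lam = n ->
  exists phi : tableau -> seq nat * tableau,
    [/\ (forall T, is_SYT lam T ->
           one_box_removed lam (phi T).1 /\ is_SYT (phi T).1 (phi T).2),
        (forall T1 T2, is_SYT lam T1 -> is_SYT lam T2 -> phi T1 = phi T2 -> T1 = T2),
        (forall mu S, one_box_removed lam mu -> is_SYT mu S ->
           exists2 T, is_SYT lam T & phi T = (mu, S)) &
        (forall T1 T2 i m, is_SYT lam T1 -> is_SYT lam T2 ->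
           ((CS_edge lam T1 (i, m) T2 /\ ~ (i <= n <= i + 2 * m)) <->
            ((phi T1).1 = (phi T2).1 /\
             CS_edge (phi T1).1 (phi T1).2 (i, m) (phi T2).2)))].
Proof.
move=> Hn Hp Hsum.
exists (fun T => (shape (del n T), del n T)); split.
- move=> T HT /=.
  by have [r [_ _ H1 H2 _]] := syt_del Hp Hsum Hn HT.
- move=> T1 T2 H1 H2 /= [Emu ES].
  have [r1 [Hr1 Hrel1 _ _ E1]] := syt_del Hp Hsum Hn H1.
  have [r2 [Hr2 Hrel2 _ _ E2]] := syt_del Hp Hsum Hn H2.
  have Er : r1 = r2.
    have := Hrel1 r1; rewrite Hrel2 Emu eqxx.
    by case: eqVneq => // _ /=; lia.
  by rewrite E1 E2 Er ES.
- move=> mu S Hob HS.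
  have [r [Hr Hrel]] := one_box_row Hob.
  case: (Hob) => Hpm Hsm Hsz _.
  have [HT Hd] := ins_SYT Hp Hpm Hsum Hsm HS Hr Hsz Hrel.
  exists (ins n lam r S) => //=.
  by rewrite Hd; case: HS => ->.
move=> T1 T2 i m H1 H2 /=.
have [Hw1s Hw1a Hw1c] := word_facts Hn Hsum H1.
have [Hw2s Hw2a Hw2c] := word_facts Hn Hsum H2.
have [r1 [_ _ _ HS1 _]] := syt_del Hp Hsum Hn H1.
have [r2 [_ _ _ HS2 _]] := syt_del Hp Hsum Hn H2.
have Hsh1 : shape T1 = lam by case: H1.
have Hsh2 : shape T2 = lam by case: H2.
set w1 := rowword T1.
have Hsz1 : size (filter (predC1 n) w1) = n.-1 by rewrite size_filter count_pn Hw1s Hw1c subn1.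
have Hsmu1 : sumn (shape (del n T1)) = n.-1 by rewrite sumn_shape_size rowword_del.
split.
- case=> [[_ _ Hd [b' [Hf Eb]]] Hni].
  case/and4P: Hd => Hm Hi Him /eqP Hrsk.
  have Hlt : i + 2 * m < n by rewrite -Hw1s in Hni; move: Him; rewrite -/w1 Hw1s; lia.
  have [Fa Fb Fc Fd Fe] := cg_facts Hlt Hw1a Hw1c Hw1s.
  move: Hf; rewrite f_tab_E rowword_collapse shape_collapse -/w1.
  case E: (fmod i (map (cg i m) w1) 0) => [w'|] //= [Eb'].
  have Hi1 : i.+1 < n by lia.
  have [Ga Gb Gc Gd] := fmod_facts Hi1 E Fc Fd Fe.
  have EW : T2 = of_rowword lam (std_word w').
    by rewrite Eb -Eb' Hsh1 std_of_rowword // Gd.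
  have Hr2 : rowword T2 = std_word w' by rewrite EW rowword_of_rowword // size_std_word Gd.
  have Hm2 : map (predC1 n) (rowword T2) = map (predC1 n) w1.
    by rewrite Hr2 std_mask // Ga Fb.
  have Emu : shape (del n T1) = shape (del n T2).
    by rewrite !shape_del Hsh1 Hsh2 Hm2.
  split; first exact: Emu.
  split.
  + exact: HS1.
  + by rewrite Emu.
  + rewrite /dyck_interval rowword_del -/w1 dyck_filter // Hm Hi Hsz1 Hrsk eqxx /=.
    by rewrite andbT; lia.
  + exists (of_rowword (shape (del n T1)) (filter (predC1 n) w')).
    rewrite f_tab_E rowword_collapse shape_collapse rowword_del -/w1 -Fa.
    have pi : predC1 n i by apply/eqP; lia.
    have pi1 : predC1 n i.+1 by apply/eqP; lia.
    rewrite (fmod_filter pi pi1) E /=; split => //.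
    have Hszw : size (filter (predC1 n) w') = n.-1 by rewrite size_filter count_pn Gd Gc subn1.
    rewrite std_of_rowword ?Hszw //.
    rewrite -std_filter // -Hr2 -rowword_del Emu.
    by rewrite of_rowwordK.
- case=> Emu [_ _ Hd [b' [Hf Eb]]].
  case/and4P: Hd => Hm Hi Him /eqP Hrsk.
  move: Him; rewrite rowword_del -/w1 Hsz1 => Him.
  have Hlt : i + 2 * m < n by lia.
  have [Fa Fb Fc Fd Fe] := cg_facts Hlt Hw1a Hw1c Hw1s.
  move: Hf; rewrite f_tab_E rowword_collapse shape_collapse rowword_del -/w1 -Fa.
  have pi : predC1 n i by apply/eqP; lia.
  have pi1 : predC1 n i.+1 by apply/eqP; lia.
  rewrite (fmod_filter pi pi1).
  case E: (fmod i (map (cg i m) w1) 0) => [w'|] //= [Eb'].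
  have Hi1 : i.+1 < n by lia.
  have [Ga Gb Gc Gd] := fmod_facts Hi1 E Fc Fd Fe.
  split; last by lia.
  split => //.
  + rewrite rowword_del -/w1 dyck_filter // in Hrsk.
    by rewrite /dyck_interval Hrsk Hm Hi Hw1s eqxx /= andbT; lia.
  exists (of_rowword lam w'); split.
    by rewrite f_tab_E rowword_collapse shape_collapse -/w1 E /= Hsh1.
  have Hszw : size (filter (predC1 n) w') = n.-1 by rewrite size_filter count_pn Gd Gc subn1.
  rewrite std_of_rowword ?Gd //.
  have <- : rowword T2 = std_word w'.
    apply: (@mask_filter_eq n).
      rewrite std_mask // Ga Fb -(del_mask Hp Hsum Hn H1 H2 Emu) //.
    rewrite std_filter // -rowword_del Eb -Eb' std_of_rowword; last by rewrite Hsmu1 Hszw.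
    by rewrite rowword_of_rowword // size_std_word Hsmu1 Hszw.
  by rewrite -Hsh2 of_rowwordK.
Qed.
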